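(* Let $R$ be a graded polynomial ring over $\mathbb F_2$ and let $0\to A\xrightarrow{\alpha}B\to C\to0$ be a short exact sequence of free differential graded $R$-modules such that $H_*(A)$ and $H_*(B)$ are free $R$-modules. Then the short exact sequence $$0\to\operatorname{coker}\alpha_*\to H_*(C)\to\ker\alpha_*\to0$$ derived from the long exact homology sequence (with $\alpha_*:H_*(A)\to H_*(B)$) splits as a sequence of $R$-modules. *)

(* Defs.v *)
From HB Require Import structures.
From mathcomp Require Import all_boot all_order all_algebra.
From mathcomp Require Import mpoly.

Set Implicit Arguments.
Unset Strict Implicit.
Unset Printing Implicit Defensive.

Import GRing.Theory.
Local Open Scope ring_scope.

(* The graded polynomial ring R = F_2[x_1,...,x_n]; the generator x_i has   *)
(* degree w i (a nonzero integer; all of the same sign, see the theorem).   *)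
Notation Rpol n := {mpoly 'F_2[n]}.

Definition wdeg (n : nat) (w : 'I_n -> int) (m : 'X_{1..n}) : int :=
  \sum_(i < n) w i * (m i)%:Z.

(* G k = the homogeneous component of degree k of V.                         *)
Definition graded_mod (n : nat) (w : 'I_n -> int) (V : lmodType (Rpol n))
    (G : int -> V -> Prop) : Prop :=
  [/\ forall k, G k 0,
      forall k u v, G k u -> G k v -> G k (u + v),
      forall k (m : 'X_{1..n}) v, G k v -> G (k + wdeg w m) ('X_[m] *: v),
      forall v, exists (s : seq int) (f : int -> V),
          (forall k, G k (f k)) /\ v = \sum_(k <- s) f k &
      forall (s : seq int) (f : int -> V), uniq s -> (forall k, G k (f k)) ->
          \sum_(k <- s) f k = 0 -> forall k, k \in s -> f k = 0].

Definition homogeneous (n : nat) (V : lmodType (Rpol n))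
    (G : int -> V -> Prop) (v : V) : Prop := exists k, G k v.

(* Differential graded R-modules (homological convention: d has degree -1;  *)
(* over F_2 the Koszul sign is irrelevant, so d is R-linear).               *)
Record dgmod (n : nat) (w : 'I_n -> int) := DGMod {
  dg_car :> lmodType (Rpol n);
  dg_gr : int -> dg_car -> Prop;
  dg_d : dg_car -> dg_car;
  dg_graded : graded_mod w dg_gr;
  dg_linear : forall (r : Rpol n) (u v : dg_car),
      dg_d (r *: u + v) = r *: dg_d u + dg_d v;
  dg_deg : forall k v, dg_gr k v -> dg_gr (k - 1) (dg_d v);
  dg_dd : forall v, dg_d (dg_d v) = 0 }.

Arguments dg_car {n w} _.
Arguments dg_gr {n w} _ _ _.
Arguments dg_d {n w} _ _.

Section DG.
Variables (n : nat) (w : 'I_n -> int).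
Implicit Types M : dgmod w.

Definition free_dgmod M : Prop :=
  exists (I : eqType) (e : I -> M),
    [/\ forall i, homogeneous (dg_gr M) (e i),
        forall v : M, exists (s : seq I) (c : I -> Rpol n),
            v = \sum_(i <- s) c i *: e i &
        forall (s : seq I) (c : I -> Rpol n), uniq s ->
            \sum_(i <- s) c i *: e i = 0 -> forall i, i \in s -> c i = 0].

Definition is_cycle M (v : M) : Prop := dg_d M v = 0.
Definition is_boundary M (v : M) : Prop := exists u : M, dg_d M u = v.

(* H_*(M) = cycles / boundaries is a free graded R-module: there are        *)
(* homogeneous cycles z_i whose homology classes form an R-basis of H_*(M). *)
Definition free_homology M : Prop :=
  exists (I : eqType) (z : I -> M),
    [/\ forall i, is_cycle (z i) /\ homogeneous (dg_gr M) (z i),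
        forall c : M, is_cycle c -> exists (s : seq I) (a : I -> Rpol n),
            is_boundary (c - \sum_(i <- s) a i *: z i) &
        forall (s : seq I) (a : I -> Rpol n), uniq s ->
            is_boundary (\sum_(i <- s) a i *: z i) ->
            forall i, i \in s -> a i = 0].

Definition dg_morph (M N : dgmod w) (f : M -> N) : Prop :=
  [/\ forall (r : Rpol n) (u v : M), f (r *: u + v) = r *: f u + f v,
      forall k v, dg_gr M k v -> dg_gr N k (f v) &
      forall v, f (dg_d M v) = dg_d N (f v)].

Definition dg_ses (A B C : dgmod w) (alpha : A -> B) (beta : B -> C) : Prop :=
  [/\ dg_morph alpha, dg_morph beta,
      injective alpha,
      (forall c : C, exists b : B, beta b = c) &
      forall b : B, beta b = 0 <-> exists a : A, alpha a = b].

Definition in_ker_alpha_star (A B : dgmod w) (alpha : A -> B) (a : A) : Prop :=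
  is_cycle a /\ is_boundary (alpha a).

(* for a cycle c of C: delta [c] = [a], delta the connecting homomorphism  *)
(* H(C) -> H(A): lift c to b in B, then d b = alpha a0 and delta [c] = [a0] *)
Definition connecting_is (A B C : dgmod w) (alpha : A -> B) (beta : B -> C)
    (c : C) (a : A) : Prop :=
  exists b : B, beta b = c /\
    exists a0 : A, alpha a0 = dg_d B b /\ is_boundary (a0 - a).

(* The short exact sequence 0 -> coker alpha_* -> H(C) -delta-> ker alpha_* *)
(* -> 0 splits (as R-modules): there is an R-linear section                 *)
(* sigma : ker alpha_* -> H(C) of delta.  sigma is given on representatives *)
(* s : A -> C (only its values on representatives of ker alpha_* matter):   *)
Definition homology_seq_splits (A B C : dgmod w) (alpha : A -> B)
    (beta : B -> C) : Prop :=
  exists s : A -> C,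
    [/\ forall a, in_ker_alpha_star alpha a -> is_cycle (s a),
        forall a a', in_ker_alpha_star alpha a -> in_ker_alpha_star alpha a' ->
           is_boundary (a - a') -> is_boundary (s a - s a'),
        forall (r : Rpol n) a a', in_ker_alpha_star alpha a ->
           in_ker_alpha_star alpha a' ->
           is_boundary (s (r *: a + a') - (r *: s a + s a')) &
        forall a, in_ker_alpha_star alpha a -> connecting_is alpha beta (s a) a].

End DG.

(* Main.v *)
Require Import Defs.
From HB Require Import structures.
From mathcomp Require Import all_boot all_order all_algebra.
From Stdlib Require Import ClassicalEpsilon.
Set Implicit Arguments.
Unset Strict Implicit.
Unset Printing Implicit Defensive.
Import GRing.Theory.
Local Open Scope ring_scope.

Definition ev (R : pzRingType) (I : Type) (V : lmodType R) (v : I -> V)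
  (l : seq (I * R)) : V := \sum_(p <- l) p.2 *: v p.1.

Section Ev.
Variables (R : pzRingType) (I : Type) (V : lmodType R).
Implicit Types (v : I -> V) (l : seq (I * R)).

Lemma ev_cat v l l' : ev v (l ++ l') = ev v l + ev v l'.
Proof. by rewrite /ev big_cat. Qed.

Lemma ev_scl v r l : ev v [seq (p.1, r * p.2) | p <- l] = r *: ev v l.
Proof. by rewrite /ev big_map scaler_sumr; apply: eq_bigr => p _; rewrite scalerA. Qed.

Lemma ev_neg v l : ev v [seq (p.1, - p.2) | p <- l] = - ev v l.
Proof. by rewrite /ev big_map -sumrN; apply: eq_bigr => p _; rewrite scaleNr. Qed.

Lemma ev_ext v v' l : (forall i, v i = v' i) -> ev v l = ev v' l.
Proof. by move=> h; apply: eq_bigr => p _; rewrite h. Qed.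

Lemma ev_sub v v' l : ev (fun i => v i - v' i) l = ev v l - ev v' l.
Proof. by rewrite /ev -sumrB; apply: eq_bigr => p _; rewrite scalerBr. Qed.

Lemma ev_seq (s : seq I) (a : I -> R) v :
  ev v [seq (i, a i) | i <- s] = \sum_(i <- s) a i *: v i.
Proof. by rewrite /ev big_map. Qed.

End Ev.

Lemma ev_flatten (R : pzRingType) (I J : Type) (V : lmodType R) (y : J -> V) (g : I -> seq (J * R)) (l : seq (I * R)) :
  ev y (flatten [seq [seq (q.1, p.2 * q.2) | q <- g p.1] | p <- l])
  = ev (fun i => ev y (g i)) l.
Proof.
elim: l => [|p l IH]; first by rewrite /ev !big_nil.
rewrite map_cons [flatten (_ :: _)]/= ev_cat IH ev_scl.
by rewrite /ev big_cons.
Qed.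

Lemma ev_regroup (R : pzRingType) (I : eqType) (V : lmodType R) (v : I -> V)
  (U : seq I) (l : seq (I * R)) :
  uniq U -> {subset map fst l <= U} ->
  ev v l = \sum_(i <- U) (\sum_(p <- l | p.1 == i) p.2) *: v i.
Proof.
move=> uU; elim: l => [|p l IH] hs.
  by rewrite /ev big_nil big1 // => i _; rewrite big_nil scale0r.
have pU : p.1 \in U by apply: hs; rewrite inE eqxx.
rewrite /ev big_cons -/(ev v l) IH; last by move=> x hx; apply: hs; rewrite inE hx orbT.
rewrite [X in _ = X](_ : _ = \sum_(i <- U) ((if p.1 == i then p.2 *: v i else 0)
   + (\sum_(q <- l | q.1 == i) q.2) *: v i)); last first.
  apply: eq_bigr => i _; rewrite big_cons; case: eqP => _ //; by rewrite ?scalerDl ?add0r.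
rewrite big_split /=; congr (_ + _).
rewrite (bigD1_seq p.1) //= eqxx big1 ?addr0 // => i; by rewrite eq_sym => /negPf ->.
Qed.

Section Lin.
Variables (R : pzRingType) (U V : lmodType R) (f : U -> V).
Hypothesis lin : forall r u v, f (r *: u + v) = r *: f u + f v.
Lemma lin0 : f 0 = 0.
Proof. have := lin 1 0 0; rewrite !scale1r addr0 => H.
have : f 0 + 0 = f 0 + f 0 by rewrite addr0. by move/addrI. Qed.
Lemma linD u v : f (u + v) = f u + f v.
Proof. by have := lin 1 u v; rewrite !scale1r. Qed.
Lemma linZ r u : f (r *: u) = r *: f u.
Proof. by have := lin r u 0; rewrite !addr0 lin0 addr0. Qed.
Lemma linN u : f (- u) = - f u.
Proof. by rewrite -scaleN1r linZ scaleN1r. Qed.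
Lemma linB u v : f (u - v) = f u - f v.
Proof. by rewrite linD linN. Qed.
Lemma lin_ev (I : Type) (z : I -> U) l : f (ev z l) = ev (fun i => f (z i)) l.
Proof. elim: l => [|p l IH]; first by rewrite /ev !big_nil lin0.
by rewrite /ev !big_cons linD linZ -/(ev _ _) IH. Qed.
End Lin.
From mathcomp Require Import mpoly.
Lemma id1 (V : zmodType) (a a' E E' : V) : a - a' - (a - E) + (a' - E') = E - E'.
Proof. by rewrite opprB (addrC E) (addrACA a (- a')) subrr add0r (addrC (- a')) subrKA. Qed.
Lemma id2z (V : zmodType) (p q X s Z : V) :
  p + q - X - (p - s + (q - Z)) = s + Z - X.
Proof.
rewrite opprD !opprB -addrA (addrC (- X)) addrA; congr (_ - X).
by rewrite (addrACA s) addrC -opprD addrNK.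
Qed.
Lemma id3 (V : zmodType) (a E : V) : a - (a - E) = E.
Proof. by rewrite opprB addrC addrNK. Qed.

Lemma keyl n (w : 'I_n -> int) (M : dgmod w) (I : eqType) (z : I -> M) :
  (forall (s : seq I) (a : I -> Rpol n), uniq s ->
     is_boundary (\sum_(i <- s) a i *: z i) -> forall i, i \in s -> a i = 0) ->
  forall l, is_boundary (ev z l) ->
  forall (V : lmodType (Rpol n)) (v : I -> V), ev v l = 0.
Proof.
move=> ind l hb V v.
set U := undup (map fst l).
have uU : uniq U := undup_uniq _.
have sU : {subset map fst l <= U} by move=> x; rewrite mem_undup.
rewrite (ev_regroup v uU sU) big1_seq // => i /andP[_ iU].
rewrite (ind U (fun i => \sum_(p <- l | p.1 == i) p.2) uU) ?scale0r //.
by rewrite -(ev_regroup z uU sU).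
Qed.

Theorem lemma3p12 (n : nat) (w : 'I_n -> int)
    (hw : (forall i, (0 < w i)%R) \/ (forall i, (w i < 0)%R))
    (A B C : dgmod w) (alpha : A -> B) (beta : B -> C) :
  free_dgmod A -> free_dgmod B -> free_dgmod C ->
  dg_ses alpha beta ->
  free_homology A -> free_homology B ->
  homology_seq_splits alpha beta.
Proof.
move=> _ _ _.
move=> [[alin _ acomm] [blin _ bcomm] ainj bsurj bexact].
move=> [I [z [zcyc zgen zind]]] [J [y [ycyc ygen yind]]].
have dA := @dg_linear _ _ A. have dB := @dg_linear _ _ B. have dC := @dg_linear _ _ C.
have ba x : beta (alpha x) = 0 by apply: (proj2 (bexact _)); exists x.
have hex : forall i, exists p : (B * seq (J * Rpol n))%type,
    dg_d B p.1 = alpha (z i) - ev y p.2.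
  move=> i.
  have cz : is_cycle (alpha (z i)).
    by rewrite /is_cycle -acomm (zcyc i).1 (lin0 alin).
  have [s [a [u hu]]] := ygen _ cz.
  by exists (u, [seq (j, a j) | j <- s]); rewrite /= hu ev_seq.
pose hh i := epsilon (inhabits ((0 : B), [::])) 
   (fun p : (B * seq (J * Rpol n))%type => dg_d B p.1 = alpha (z i) - ev y p.2).
have hP i : dg_d B (hh i).1 = alpha (z i) - ev y (hh i).2 := epsilon_spec _ _ (hex i).
pose dec (a : A) := epsilon (inhabits ([::], (0 : A)))
   (fun p : (seq (I * Rpol n) * A)%type => a - ev z p.1 = dg_d A p.2).
have decP a : is_cycle a -> a - ev z (dec a).1 = dg_d A (dec a).2.
  move=> ca; rewrite /dec; apply: (epsilon_spec (inhabits ([::], (0 : A))) (fun p : (seq (I * Rpol n) * A)%type => a - ev z p.1 = dg_d A p.2)).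
  have [s [c [u hu]]] := zgen _ ca.
  by exists ([seq (i, c i) | i <- s], u); rewrite /= ev_seq.
pose h i := (hh i).1.
pose L (l : seq (I * Rpol n)) :=
  flatten [seq [seq (q.1, p.2 * q.2) | q <- (hh p.1).2] | p <- l].
have lift a : is_cycle a -> dg_d B (ev h (dec a).1 + alpha (dec a).2)
    = alpha a - ev y (L (dec a).1).
  move=> ca.
  rewrite (linD dB) (lin_ev dB) -acomm -(decP a ca).
  rewrite (ev_ext _ hP) ev_sub -(lin_ev alin) /L (ev_flatten y (fun i => (hh i).2)) (linB alin).
  by rewrite addrC subrKA.
have lift0 a : in_ker_alpha_star alpha a -> ev y (L (dec a).1) = 0.
  case=> ca [t ht]; apply: (keyl yind) => //.
  exists (t - (ev h (dec a).1 + alpha (dec a).2)).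
  by rewrite (linB dB) ht lift // id3.
have sE a : beta (ev h (dec a).1) = beta (ev h (dec a).1 + alpha (dec a).2).
  by rewrite (linD blin) ba addr0.
exists (fun a => beta (ev h (dec a).1)); split.
- move=> a ka; rewrite /is_cycle sE -bcomm lift ?lift0 ?subr0 ?ba //; exact: ka.1.
- move=> a a' ka ka' [u hu]; exists 0; rewrite (lin0 dC).
  rewrite -(linB blin) -ev_neg -ev_cat (keyl zind) ?(lin0 blin) //.
  exists (u - (dec a).2 + (dec a').2).
  rewrite ev_cat ev_neg (linD dA) (linB dA) hu -(decP a ka.1) -(decP a' ka'.1).
  by rewrite id1.
- move=> r a a' ka ka'; exists 0; rewrite (lin0 dC).
  have ca'' : is_cycle (r *: a + a') by rewrite /is_cycle dA ka.1 ka'.1 scaler0 addr0.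
  rewrite -(linZ blin) -(linD blin) -(linB blin) -ev_scl -ev_cat -ev_neg -ev_cat.
  rewrite (keyl zind) ?(lin0 blin) //.
  exists (r *: (dec a).2 + (dec a').2 - (dec (r *: a + a')).2).
  rewrite ev_cat ev_neg ev_cat ev_scl (linB dA) (linD dA) (linZ dA).
  rewrite -(decP a ka.1) -(decP a' ka'.1) -(decP _ ca'').
  by rewrite scalerBr; apply: oppr_inj; rewrite [LHS]opprB [RHS]opprB id2z.
- move=> a ka; exists (ev h (dec a).1 + alpha (dec a).2); split; first by rewrite sE.
  exists a; split; last by exists 0; rewrite (lin0 dA) subrr.
  by rewrite lift ?lift0 ?subr0 //; exact: ka.1.
Qed.
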